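(* Let $G$ be a well-bicovered graph with adjacent vertices $u$ and $v$, and let $H$ be a bipartite graph (disjoint from $G$) with adjacent vertices $u'$ and $v'$. Let $F$ be the graph formed from the disjoint union of $G$ and $H$ by identifying $u$ with $u'$ and $v$ with $v'$. Then $F$ is well-bicovered.
   Context: All graphs are finite and simple; ''subgraph'' means induced subgraph. A graph is well-bicovered if every vertex-inclusion-maximal induced bipartite subgraph has the same order. *)

(* Defs.v *)
(* Simple graphs: symmetric irreflexive relations on a finType. *)
From mathcomp Require Import all_boot.
Set Implicit Arguments. Unset Strict Implicit. Unset Printing Implicit Defensive.

Definition bipartite_set (T : finType) (e : rel T) (S : {set T}) : Prop :=
  exists c : T -> bool, forall x y, x \in S -> y \in S -> e x y -> c x != c y.

Definition bipartite_graph (T : finType) (e : rel T) : Prop :=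
  bipartite_set e [set: T].

Definition maximal_bipartite_set (T : finType) (e : rel T) (S : {set T}) : Prop :=
  bipartite_set e S /\
  (forall S' : {set T}, S \subset S' -> bipartite_set e S' -> S' = S).

Definition well_bicovered (T : finType) (e : rel T) : Prop :=
  forall S1 S2 : {set T}, maximal_bipartite_set e S1 -> maximal_bipartite_set e S2 ->
    #|S1| = #|S2|.

(* Gluing: vertices of F are those of G together with the vertices of H other
   than u', v' (u' is identified with u, v' with v). *)
Definition hrest (VH : finType) (u' v' : VH) := {x : VH | (x != u') && (x != v')}.

Definition glue_vertex (VG VH : finType) (u' v' : VH) : finType :=
  (VG + hrest u' v')%type.

Definition glue_edge (VG VH : finType) (eG : rel VG) (eH : rel VH)
  (u v : VG) (u' v' : VH) : rel (glue_vertex VG u' v') :=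
  fun x y =>
    match x, y with
    | inl a, inl b => eG a b
    | inr a, inr b => eH (val a) (val b)
    | inl a, inr b => ((a == u) && eH u' (val b)) || ((a == v) && eH v' (val b))
    | inr a, inl b => ((b == u) && eH (val a) u') || ((b == v) && eH (val a) v')
    end.

(* Main.v *)
Require Import Defs.
From mathcomp Require Import all_boot.

Section S.
Variables (VG VH : finType) (eG : rel VG) (eH : rel VH) (u v : VG) (u' v' : VH).
Hypothesis euv : eG u v.
Hypothesis eH' : eH u' v'.
Hypothesis Hbip : bipartite_graph eH.

Local Notation F := (@glue_edge VG VH eG eH u v u' v').
Local Notation V := (glue_vertex VG u' v').

Definition ext (A : {set VG}) : {set V} :=
  [set x | match x with inl a => a \in A | inr _ => true end].
Definition proj (S : {set V}) : {set VG} := [set a | inl a \in S].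

Lemma addK3 (x y b : bool) : (x (+) b != y (+) b) = (x != y).
Proof. by case: x; case: y; case: b. Qed.

Lemma ext_bip (A : {set VG}) : bipartite_set eG A -> bipartite_set F (ext A).
Proof.
case=> c Hc; case: Hbip => d Hd.
pose b := if u \in A then c u (+) d u' else c v (+) d v'.
have duv : d u' != d v' by apply: Hd; rewrite ?inE.
have Hu : u \in A -> c u = d u' (+) b.
  by move=> uA; rewrite /b uA; case: (c u); case: (d u').
have Hv : v \in A -> c v = d v' (+) b.
  move=> vA; rewrite /b; case: ifP => uA.
    have cuv : c u != c v by apply: Hc.
    move: cuv duv; case: (c u); case: (c v); case: (d u'); case: (d v') => //.
  by case: (c v); case: (d v').
exists (fun x => match x with inl a => c a | inr z => d (val z) (+) b end).
move=> [a|z] [a'|z'] /=; rewrite !inE /= => Ha Ha' E.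
- exact: Hc.
- case/orP: E => /andP[/eqP Ea E]; subst a.
  + by rewrite Hu // addK3; apply: Hd; rewrite ?inE.
  + by rewrite Hv // addK3; apply: Hd; rewrite ?inE.
- case/orP: E => /andP[/eqP Ea E]; subst a'.
  + by rewrite Hu // addK3; apply: Hd; rewrite ?inE.
  + by rewrite Hv // addK3; apply: Hd; rewrite ?inE.
- by rewrite addK3; apply: Hd; rewrite ?inE.
Qed.

Lemma key (S : {set V}) : maximal_bipartite_set F S ->
  S = ext (proj S) /\ maximal_bipartite_set eG (proj S).
Proof.
case=> [[c Hc] Hmax].
have bp : bipartite_set eG (proj S).
  exists (fun a => c (inl a)) => x y; rewrite !inE => Hx Hy E.
  exact: (Hc (inl x) (inl y)).
have sub : S \subset ext (proj S).
  by apply/subsetP => -[a|z] H; rewrite !inE.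
have eq1 : ext (proj S) = S by apply: Hmax => //; apply: ext_bip.
split; first by [].
split=> // A' sA bA'.
have : ext A' = S.
  apply: Hmax; last exact: ext_bip. rewrite -eq1; apply/subsetP => -[a|z]; rewrite !inE //.
  by move=> H; apply: (subsetP sA); rewrite inE.
rewrite -eq1 => E; apply/setP => a.
by move/setP: E => /(_ (inl a)); rewrite !inE.
Qed.

Lemma card_ext (A : {set VG}) :
  #|ext A| = #|A| + #|[set: hrest u' v']|.
Proof.
have -> : ext A = (inl @: A) :|: (inr @: [set: hrest u' v']).
  apply/setP => -[a|z]; rewrite !inE.
  - rewrite orbC; case: (imsetP) => [[z _ //]|_] /=.
    apply/idP/imsetP => [H|[a' H [->]]] //; by exists a.
  - apply/esym/orP; right; apply/imsetP; by exists z; rewrite ?inE.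
rewrite cardsU.
have -> : (inl @: A) :&: (inr @: [set: hrest u' v']) = set0.
  apply/setP => x; rewrite !inE; apply/andP => -[/imsetP[a _ ->] /imsetP[z _]] //.
rewrite cards0 subn0 !card_imset //; by move=> x y [].
Qed.

End S.

Theorem mainTheorem10 (VG VH : finType) (eG : rel VG) (eH : rel VH)
  (symG : symmetric eG) (irrG : irreflexive eG)
  (symH : symmetric eH) (irrH : irreflexive eH)
  (u v : VG) (u' v' : VH) :
  well_bicovered eG -> eG u v ->
  bipartite_graph eH -> eH u' v' ->
  well_bicovered (@glue_edge VG VH eG eH u v u' v').
Proof.
move=> wb euv Hb eH' S1 S2 M1 M2.
case: (@key _ _ _ _ _ _ _ _ euv eH' Hb _ M1) => E1 M1'.
case: (@key _ _ _ _ _ _ _ _ euv eH' Hb _ M2) => E2 M2'.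
by rewrite E1 E2 !card_ext (wb _ _ M1' M2').
Qed.
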